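(* Let $P$ be a finite poset and let $\mathcal{J}\subseteq \mathrm{Hom}(P,\mathbb{N})$ be a poset ideal. Then the letterplace ideal $L(\mathcal{J},P)$ and the co-letterplace ideal $L(P,\mathcal{J})$ in $k[x_{P\times\mathbb{N}}]$ are Alexander dual: the monomials of $L(\mathcal{J},P)$ are precisely the monomials of $k[x_{P\times\mathbb{N}}]$ having a nontrivial common divisor with every monomial of $L(P,\mathcal{J})$ (and vice versa).
   Context: $\mathbb{N}=\{0,1,2,\dots\}$. For a finite poset $P$, $\mathrm{Hom}(P,\mathbb{N})$ is the set of isotone maps $\phi:P\to\mathbb{N}$ (i.e. $p\le q\Rightarrow \phi(p)\le\phi(q)$), partially ordered by $\phi\le\psi$ iff $\phi(p)\le\psi(p)$ for all $p$. A poset ideal (resp. filter) is a down-closed (resp. up-closed) subset; $\mathcal{J}^c$ denotes the complement of $\mathcal{J}$ in $\mathrm{Hom}(P,\mathbb{N})$. The ascent of $\phi\in\mathrm{Hom}(P,\mathbb{N})$ is $\Lambda\phi=\{(p,i)\in P\times\mathbb{N} : \phi(q)\le i<\phi(p)\text{ for all } q<p\}$. A marker for $\mathcal{J}$ is a pair of a poset ideal $I\subseteq P$ and an isotone map $\alpha:I\to\mathbb{N}$ such that every isotone $\phi:P\to\mathbb{N}$ with $\phi|_I=\alpha$ lies in $\mathcal{J}$; its graph is $\Gamma\alpha=\{(p,\alpha(p)):p\in I\}$. Let $k$ be a field and $k[x_{P\times\mathbb{N}}]$ the polynomial ring in variables $x_{p,i}$, $(p,i)\in P\times\mathbb{N}$;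 for finite $T\subseteq P\times\mathbb{N}$ put $m_T=\prod_{t\in T}x_t$. The co-letterplace ideal $L(P,\mathcal{J})$ is generated by the $m_{\Gamma\alpha}$ for all markers $\alpha$ of $\mathcal{J}$; the letterplace ideal $L(\mathcal{J},P)$ is generated by the $m_{\Lambda\phi}$ for all $\phi\in\mathcal{J}^c$. *)

(* Defs.v *)
From HB Require Import structures.
From mathcomp Require Import all_boot all_order all_algebra.
From mathcomp Require Import finmap.
From mathcomp.multinomials Require Import monalg.
Set Implicit Arguments. Unset Strict Implicit. Unset Printing Implicit Defensive.
Import Order.TTheory GRing.Theory.
Local Open Scope ring_scope.

(* The polynomial ring k[x_{P x N}] in the (infinitely many) variables
   x_{p,i}, (p,i) in P x nat: the monoid algebra over commutative monomials. *)
Definition polyring (k : fieldType) (V : choiceType) := {malg k[{cmonom V}]}.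

Definition monomial (k : fieldType) (V : choiceType) (m : {cmonom V}) : polyring k V :=
  << m >>.

Definition var (k : fieldType) (V : choiceType) (t : V) : polyring k V :=
  << ucm t >>.

Definition ideal_gen (R : comNzRingType) (G : R -> Prop) (f : R) : Prop :=
  exists (n : nat) (r g : 'I_n -> R),
    (forall j, G (g j)) /\ f = \sum_(j < n) r j * g j.

Definition common_divisor (V : choiceType) (m1 m2 : {cmonom V}) : Prop :=
  exists t : V, (0 < m1 t)%N /\ (0 < m2 t)%N.

Section LP.
Context {disp : Order.disp_t} (P : finPOrderType disp).

Definition isotone (phi : {ffun P -> nat}) : Prop :=
  forall p q : P, (p <= q)%O -> (phi p <= phi q)%N.

Definition hom_ideal (J : {ffun P -> nat} -> Prop) : Prop :=
  (forall phi, J phi -> isotone phi) /\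
  (forall phi psi, isotone psi -> J phi -> (forall p, (psi p <= phi p)%N) -> J psi).

Definition in_ascent (phi : {ffun P -> nat}) (p : P) (i : nat) : bool :=
  [forall q : P, (q < p)%O ==> (phi q <= i)%N] && (i < phi p)%N.

Definition m_ascent (k : fieldType) (phi : {ffun P -> nat}) : polyring k (P * nat)%type :=
  \prod_(p : P) \prod_(i < phi p | in_ascent phi p i) var k (p, val i).

Definition down_closed (I : {set P}) : Prop :=
  forall p q : P, (q <= p)%O -> p \in I -> q \in I.

(* (I, alpha) is a marker for J; alpha : I -> N is represented by a function
   on P of which only the values on I matter *)
Definition marker (J : {ffun P -> nat} -> Prop) (I : {set P}) (alpha : {ffun P -> nat}) : Prop :=
  [/\ down_closed I,
      (forall p q, p \in I -> q \in I -> (p <= q)%O -> (alpha p <= alpha q)%N) &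
      (forall phi, isotone phi -> (forall p, p \in I -> phi p = alpha p) -> J phi)].

Definition m_graph (k : fieldType) (I : {set P}) (alpha : {ffun P -> nat}) :
  polyring k (P * nat)%type :=
  \prod_(p in I) var k (p, alpha p).

Definition LP_gens (k : fieldType) (J : {ffun P -> nat} -> Prop)
  (f : polyring k (P * nat)%type) : Prop :=
  exists phi, isotone phi /\ ~ J phi /\ f = m_ascent k phi.
Arguments LP_gens k J f : clear implicits.

Definition coLP_gens (k : fieldType) (J : {ffun P -> nat} -> Prop)
  (f : polyring k (P * nat)%type) : Prop :=
  exists I alpha, marker J I alpha /\ f = m_graph k I alpha.
Arguments coLP_gens k J f : clear implicits.

Definition letterplace (k : fieldType) (J : {ffun P -> nat} -> Prop) :
  polyring k (P * nat)%type -> Prop := ideal_gen (LP_gens k J).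
Definition coletterplace (k : fieldType) (J : {ffun P -> nat} -> Prop) :
  polyring k (P * nat)%type -> Prop := ideal_gen (coLP_gens k J).

End LP.
Arguments letterplace {disp P} k J.
Arguments coletterplace {disp P} k J.
Arguments monomial k {V} m.
Arguments var k {V} t.

(* Main.v *)
Require Import Defs.
From HB Require Import structures.
From mathcomp Require Import all_boot all_order all_algebra.
From mathcomp Require Import finmap.
From mathcomp.multinomials Require Import monalg.
From Stdlib Require Import Classical.
From mathcomp Require Import zify.
Set Implicit Arguments. Unset Strict Implicit. Unset Printing Implicit Defensive.
Import Order.TTheory GRing.Theory.

Section Alg.
Variables (k : fieldType) (V : choiceType).

Lemma monoM (a b : {cmonom V}) :
  (monomial k a * monomial k b)%R = monomial k (mmul a b).
Proof. by rewrite /monomial malgM_def fgmulUU mulr1. Qed.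

Lemma mono_prod (X : Type) (r : seq X) (Q : pred X) (F : X -> {cmonom V}) :
  (\prod_(x <- r | Q x) monomial k (F x))%R =
  monomial k (\big[@mmul _/@mone _]_(x <- r | Q x) F x).
Proof.
rewrite (big_morph (monomial k) (id1 := 1%R) (op1 := *%R) (fun a b => esym (monoM a b))) //.
Qed.

Lemma cm_big (X : Type) (r : seq X) (Q : pred X) (F : X -> {cmonom V}) t :
  (\big[@mmul _/@mone _]_(x <- r | Q x) F x) t = \sum_(x <- r | Q x) F x t.
Proof.
by rewrite (big_morph (fun m : {cmonom V} => m t) (id1 := 0) (op1 := addn) (fun a b => cmM t a b) (cm1 t)).
Qed.

Lemma ideal_mono (G : polyring k V -> Prop) (Gm : {cmonom V} -> Prop) m :
  (forall f, G f -> exists g, Gm g /\ f = monomial k g) ->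
  ideal_gen G (monomial k m) -> exists g a, Gm g /\ m = mmul a g.
Proof.
move=> hG [n [r [g [hg e]]]].
have [/existsP [j hj]|hn] := boolP [exists j, ((r j * g j)@_m != 0)%R].
  have [gj [Ggj egj]] := hG _ (hg j).
  move: hj; rewrite mcoeff_neq0 egj => /msuppM_le [k1 [k2 [_ h2 ->]]].
  move: h2; rewrite /monomial msuppU1 in_fset1 => /eqP ->.
  by exists gj, k1.
exfalso; have := congr1 (mcoeff m) e.
rewrite raddf_sum /= big1 ?/monomial ?mcoeffUU => [/eqP|j _]; first by rewrite oner_eq0.
by apply/eqP; move: hn; rewrite negb_exists => /forallP /(_ j); rewrite negbK.
Qed.

Lemma ideal_mono_in (G : polyring k V -> Prop) g a :
  G (monomial k g) -> ideal_gen G (monomial k (mmul a g)).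
Proof.
move=> hg; exists 1%N, (fun _ => monomial k a), (fun _ => monomial k g); split => //.
by rewrite big_ord1 monoM.
Qed.
End Alg.

Lemma sum_ord_ind n j (Q : pred nat) :
  \sum_(i < n | Q i) (val i == j) = (j < n) && Q j.
Proof.
case: (ltnP j n) => hj.
  rewrite big_mkcond (bigD1 (Ordinal hj)) //= big1 => [|i ne].
    by case: (Q j); rewrite ?eqxx.
  case: (Q i) => //; case: eqP => // e; case/eqP: ne; exact: val_inj.
rewrite big1 // => i _; case: eqP => // e; move: (ltn_ord i); rewrite e ltnNge hj.
by [].
Qed.

Section Comb.
Variables (k : fieldType) (disp : Order.disp_t) (P : finPOrderType disp).
Variable (J : {ffun P -> nat} -> Prop).
Hypothesis hJ : hom_ideal J.

Definition mA (phi : {ffun P -> nat}) : {cmonom (P * nat)%type} :=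
  \big[@mmul _/@mone _]_(p : P)
     \big[@mmul _/@mone _]_(i < phi p | in_ascent phi p i) ucm (p, val i).

Definition mG (I : {set P}) (alpha : {ffun P -> nat}) : {cmonom (P * nat)%type} :=
  \big[@mmul _/@mone _]_(p in I) ucm (p, alpha p).

Lemma mA_val phi p j : mA phi (p, j) = in_ascent phi p j.
Proof.
rewrite /mA cm_big (bigD1 p) //= [X in _ + X]big1 => [|q nq].
  rewrite cm_big addn0.
  under eq_bigr => i _ do rewrite cmU xpair_eqE eqxx /=.
  rewrite sum_ord_ind; case h: in_ascent; rewrite ?andbF ?andbT //.
  by move: h; rewrite /in_ascent => /andP [_ ->].
by rewrite cm_big big1 // => i _; rewrite cmU xpair_eqE (negbTE nq).
Qed.

Lemma mG_val I alpha p j : mG I alpha (p, j) = (p \in I) && (alpha p == j).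
Proof.
rewrite /mG cm_big big_mkcond (bigD1 p) //= [X in _ + X]big1 => [|q nq].
  by case: (p \in I); rewrite ?addn0 // cmU xpair_eqE eqxx.
by case: (q \in I) => //; rewrite cmU xpair_eqE (negbTE nq).
Qed.

Lemma m_ascentE phi : m_ascent k phi = monomial k (mA phi).
Proof.
rewrite /m_ascent /mA -mono_prod; apply: eq_bigr => p _; exact: mono_prod.
Qed.

Lemma m_graphE I alpha : m_graph k I alpha = monomial k (mG I alpha).
Proof. exact: mono_prod. Qed.


Definition LPd (m : {cmonom (P * nat)%type}) := exists phi, isotone phi /\ ~ J phi /\
  (forall p i, in_ascent phi p i -> 0 < m (p, i)).
Definition CLd (m : {cmonom (P * nat)%type}) := exists I alpha, marker J I alpha /\
  (forall p, p \in I -> 0 < m (p, alpha p)).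

Lemma LP_iff m : letterplace k J (monomial k m) <-> LPd m.
Proof.
split.
  move=> /(ideal_mono (Gm := fun g => exists phi, isotone phi /\ ~ J phi /\ g = mA phi)) [].
    move=> f [phi [iso [nJ ->]]]; exists (mA phi); split; [by exists phi|exact: m_ascentE].
  move=> g [a [[phi [iso [nJ ->]]] ->]]; exists phi; do 2 split => //.
  by move=> p i hi; rewrite cmM mA_val hi addn1.
move=> [phi [iso [nJ hS]]].
have -> : m = mmul (divcm m (mA phi)) (mA phi).
  apply/eqP/cmP => [[p i]]; rewrite cmM divcmE mA_val subnK //.
  by case h: in_ascent => //=; exact: hS.
apply: ideal_mono_in; exists phi; split => //; split => //; by rewrite m_ascentE.
Qed.

Lemma CL_iff m : coletterplace k J (monomial k m) <-> CLd m.
Proof.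
split.
  move=> /(ideal_mono (Gm := fun g => exists I alpha, marker J I alpha /\ g = mG I alpha)) [].
    move=> f [I [alpha [mk ->]]]; exists (mG I alpha); split; [by exists I, alpha|exact: m_graphE].
  move=> g [a [[I [alpha [mk ->]]] ->]]; exists I, alpha; split => //.
  by move=> p pI; rewrite cmM mG_val pI eqxx addn1.
move=> [I [alpha [mk hS]]].
have -> : m = mmul (divcm m (mG I alpha)) (mG I alpha).
  apply/eqP/cmP => [[p i]]; rewrite cmM divcmE mG_val subnK //.
  case pI: (p \in I) => //=; case: eqP => //= <-; exact: hS.
apply: ideal_mono_in; exists I, alpha; split => //; by rewrite m_graphE.
Qed.

Lemma below_lt (p q : P) : (q < p)%O ->
  #|[set x | (x < q)%O]| < #|[set x | (x < p)%O]|.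
Proof.
move=> qp; apply: proper_card; apply/properP; split.
  by apply/subsetP => x; rewrite !inE => xq; exact: lt_trans xq qp.
by exists q; rewrite !inE ?qp ?ltxx.
Qed.

Lemma below_P (p : P) : #|[set x | (x < p)%O]| < #|P|.
Proof.
rewrite -cardsT; apply: proper_card; apply/properP; split; first exact: subsetT.
by exists p; rewrite !inE ?ltxx.
Qed.

Lemma key phi I alpha : isotone phi -> ~ J phi -> marker J I alpha ->
  exists2 p, p \in I & in_ascent phi p (alpha p).
Proof.
move=> iso nJ [dc aiso ext].
have [/existsP [p /andP [pI hp]]|hn] :=
  boolP [exists p, (p \in I) && in_ascent phi p (alpha p)]; first by exists p.
exfalso; apply: nJ.
have le : forall p, p \in I -> phi p <= alpha p.
  suff: forall n p, #|[set x | (x < p)%O]| < n -> p \in I -> phi p <= alpha p.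
    by move=> h p; apply: h (below_P p).
  elim=> // n IH p hp pI; rewrite ltnS in hp.
  move: hn; rewrite negb_exists => /forallP /(_ p); rewrite pI /= /in_ascent negb_and.
  case/orP => [|]; last by rewrite -leqNgt.
  move/forallP => []; move=> q; apply/implyP => qp.
  have qI : q \in I := dc p q (ltW qp) pI.
  apply: leq_trans (IH q _ qI) (aiso q p qI pI (ltW qp)).
  exact: leq_trans (below_lt qp) hp.
pose psi := [ffun p => maxn (phi p) (\max_(q | (q \in I) && (q <= p)%O) alpha q)].
have isopsi : isotone psi.
  move=> p q pq; rewrite !ffunE geq_max !leq_max (iso _ _ pq) /=; apply/orP; right.
  apply/bigmax_leqP => x /andP [xI xp]; apply: leq_bigmax_cond.
  by rewrite xI (le_trans xp pq).
have JJ : J psi.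
  apply: ext isopsi _ => p pI; rewrite ffunE.
  have -> : \max_(q | (q \in I) && (q <= p)%O) alpha q = alpha p.
    apply/eqP; rewrite eqn_leq; apply/andP; split.
      by apply/bigmax_leqP => q /andP [qI qp]; exact: aiso.
    by apply: leq_bigmax_cond; rewrite pI lexx.
  exact/maxn_idPr/le.
by apply: (hJ.2 psi phi iso JJ) => p; rewrite ffunE leq_maxl.
Qed.

Section Fix.
Variables (c : P -> nat -> bool) (N : nat).
Hypothesis hc : forall p i, N <= i -> c p i.

Definition nxt p x := x + find (fun j => c p (x + j)) (iota 0 N.+1).

Lemma nxt_has p x : has (fun j => c p (x + j)) (iota 0 N.+1).
Proof. apply/hasP; exists N; first by rewrite mem_iota add0n ltnSn. by apply: hc; exact: leq_addl. Qed.

Lemma nxt_c p x : c p (nxt p x).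
Proof.
have hh := nxt_has p x.
have := nth_find 0 hh; rewrite nth_iota ?add0n //.
by move: hh; rewrite has_find size_iota.
Qed.

Lemma nxt_min p x i : x <= i -> i < nxt p x -> ~~ c p i.
Proof.
move=> h1 h2.
have hi : i - x < find (fun j => c p (x + j)) (iota 0 N.+1).
  by move: h2; rewrite /nxt; lia.
have := before_find 0 hi.
have hs : i - x < N.+1.
  apply: leq_trans hi _; have := find_size (fun j => c p (x + j)) (iota 0 N.+1); by rewrite size_iota.
by rewrite nth_iota // add0n subnKC // => ->.
Qed.

Definition mx (f : P -> nat) p := \max_(q | (q < p)%O) f q.
Definition Fstep (f : P -> nat) : P -> nat := fun p => nxt p (mx f p).

Lemma stab n : forall p, #|[set x | (x < p)%O]| < n ->
  forall m, iter (n + m) Fstep (fun _ => 0) p = iter n Fstep (fun _ => 0) p.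
Proof.
elim: n => // n IH p hp m; rewrite addSn !iterS /Fstep /mx; congr nxt.
apply: eq_bigr => q qp; apply: IH; rewrite ltnS in hp.
exact: leq_trans (below_lt qp) hp.
Qed.

Definition psi0 := iter #|P| Fstep (fun _ => 0).
Definition psi : {ffun P -> nat} := [ffun p => psi0 p].

Lemma psi_fix p : psi0 p = nxt p (mx psi0 p).
Proof.
have := stab (below_P p) 1; rewrite addn1 iterS => h; rewrite {1}/psi0 -h; by [].
Qed.

Lemma psi_lt q p : (q < p)%O -> psi q <= psi p.
Proof.
move=> qp; rewrite !ffunE [psi0 p]psi_fix.
apply: leq_trans (leq_addr _ _); exact: leq_bigmax_cond.
Qed.

Lemma psi_iso : isotone psi.
Proof. by move=> p q; rewrite le_eqVlt => /orP [/eqP ->|]; [|exact: psi_lt]. Qed.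

Lemma psi_c p : c p (psi p).
Proof. by rewrite ffunE psi_fix; exact: nxt_c. Qed.

Lemma psi_asc p i : in_ascent psi p i -> ~~ c p i.
Proof.
move=> /andP [/forallP h hi]; rewrite ffunE psi_fix in hi; apply: nxt_min hi.
apply/bigmax_leqP => q qp; have := h q; by rewrite qp /= ffunE.
Qed.
End Fix.

Definition Nb (m : {cmonom (P * nat)%type}) := (\max_(t <- finsupp m) t.2).+1.

Lemma Nb_spec m p i : Nb m <= i -> m (p, i) = 0.
Proof.
move=> h; apply/eqP; rewrite cmE_eq0; apply/negP => hin.
have := leq_bigmax_seq (F := fun t : P * nat => t.2) (P := predT) (p, i) hin erefl.
by move: h; rewrite /Nb /=; lia.
Qed.

Lemma C1 m : LPd m <->
  (forall I alpha, marker J I alpha -> exists2 p, p \in I & 0 < m (p, alpha p)).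
Proof.
split.
  move=> [phi [iso [nJ hS]]] I alpha mk; have [p pI hp] := key iso nJ mk.
  by exists p => //; exact: hS.
move=> H; pose c p i := m (p, i) == 0.
have hc : forall p i, Nb m <= i -> c p i by move=> p i h; rewrite /c Nb_spec.
exists (psi c (Nb m)); split; first exact: psi_iso.
split.
  move=> Jpsi.
  have mk : marker J setT (psi c (Nb m)).
    split; first by move=> p q _; rewrite inE.
      by move=> p q _ _; exact: psi_iso.
    move=> phi _ h; have -> // : phi = psi c (Nb m).
    by apply/ffunP => p; rewrite h ?inE.
  have [p _ hp] := H _ _ mk; have := psi_c hc p; rewrite /c => /eqP e.
  by rewrite e in hp.
by move=> p i /psi_asc; rewrite /c lt0n.
Qed.

Lemma C2 m : CLd m <->
  (forall phi, isotone phi -> ~ J phi -> exists p i, in_ascent phi p i /\ 0 < m (p, i)).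
Proof.
split.
  move=> [I [alpha [mk hS]]] phi iso nJ; have [p pI hp] := key iso nJ mk.
  by exists p, (alpha p); split => //; exact: hS.
move=> H; set N := Nb m; pose c p i := (0 < m (p, i)) || (N <= i).
have hc : forall p i, N <= i -> c p i by move=> p i h; rewrite /c h orbT.
set ps := psi c N.
exists [set p | ps p < N], ps; split; last first.
  move=> p; rewrite inE => h; have := psi_c hc p; rewrite /c -/ps; case/orP => // h2; by rewrite leqNgt h in h2.
split.
- move=> p q qp; rewrite !inE; apply: leq_ltn_trans; exact: psi_iso.
- by move=> p q _ _; exact: psi_iso.
move=> phi iso ext; pose ph' := [ffun p => maxn (ps p) (phi p)].
have iso' : isotone ph'.
  move=> p q pq; have := @psi_iso c N _ _ pq; rewrite !ffunE geq_max !leq_max => ->.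
  by rewrite (iso _ _ pq) orbT.
have J' : J ph'.
  apply: NNPP => nJ; have [p [i [hasc hm]]] := H _ iso' nJ.
  have iN : i < N.
    by rewrite ltnNge; apply/negP => hi; rewrite Nb_spec in hm.
  have : in_ascent ps p i.
    move: hasc => /andP [/forallP h hi]; apply/andP; split.
      apply/forallP => q; apply/implyP => qp.
      by have := h q; rewrite qp /= ffunE geq_max => /andP [].
    rewrite ffunE in hi; case hp: (ps p < N).
      by rewrite (ext p) ?inE // maxnn in hi.
    by move: hp; rewrite ltnNge => /negbFE; lia.
  by move/psi_asc; rewrite /c hm.
by apply: (hJ.2 _ _ iso J') => p; rewrite ffunE leq_maxr.
Qed.

Lemma R1 m : (forall m', coletterplace k J (monomial k m') -> common_divisor m m') <->
  (forall I alpha, marker J I alpha -> exists2 p, p \in I & 0 < m (p, alpha p)).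
Proof.
split.
  move=> H I alpha mk.
  have hc : coletterplace k J (monomial k (mG I alpha)).
    by apply/CL_iff; exists I, alpha; split => // p pI; rewrite mG_val pI eqxx.
  have [[p j] [h1 h2]] := H _ hc.
  by move: h2; rewrite mG_val lt0b => /andP [pI /eqP e]; exists p => //; rewrite e.
move=> H m' /CL_iff [I [alpha [mk hS]]]; have [p pI hp] := H _ _ mk.
by exists (p, alpha p); split => //; exact: hS.
Qed.

Lemma R2 m : (forall m', letterplace k J (monomial k m') -> common_divisor m m') <->
  (forall phi, isotone phi -> ~ J phi -> exists p i, in_ascent phi p i /\ 0 < m (p, i)).
Proof.
split.
  move=> H phi iso nJ.
  have hc : letterplace k J (monomial k (mA phi)).
    by apply/LP_iff; exists phi; split => //; split => // p i hi; rewrite mA_val hi.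
  have [[p i] [h1 h2]] := H _ hc.
  by move: h2; rewrite mA_val lt0b => h2; exists p, i.
move=> H m' /LP_iff [phi [iso [nJ hS]]]; have [p [i [h1 h2]]] := H phi iso nJ.
by exists (p, i); split => //; exact: hS.
Qed.

End Comb.

Theorem proposition1p11 (k : fieldType) (disp : Order.disp_t) (P : finPOrderType disp)
  (J : {ffun P -> nat} -> Prop) :
  hom_ideal J ->
  (forall m : {cmonom (P * nat)%type},
     letterplace k J (monomial k m) <->
     (forall m' : {cmonom (P * nat)%type},
        coletterplace k J (monomial k m') -> common_divisor m m')) /\
  (forall m : {cmonom (P * nat)%type},
     coletterplace k J (monomial k m) <->
     (forall m' : {cmonom (P * nat)%type},
        letterplace k J (monomial k m') -> common_divisor m m')).
Proof.
move=> hJ; split => m.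
  apply: (iff_trans (LP_iff _ _ m)); apply: (iff_trans (C1 hJ m)).
  exact: iff_sym (R1 _ _ m).
apply: (iff_trans (CL_iff _ _ m)); apply: (iff_trans (C2 hJ m)).
exact: iff_sym (R2 _ _ m).
Qed.
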